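(* Let $n\geq 4$ and let $Q$ be a regular $n$-gon. Then there exists a (symmetric) bilinear form $B$ on $X_Q^*$ such that $B([\psi_d],[\psi_{d'}])>0$ for all $d,d'\in\mathrm{Diag}_n$ that do not cross (including $d=d'$); i.e. $\Sigma_Q$ satisfies: $B(f_1^\perp,f_2^\perp)>0$ whenever facets $f_1,f_2$ of $\Sigma_Q$ share a vertex.
   Context: Let $Q$ be a convex $n$-gon in $\mathbb{R}^2$ with vertices $p_1,\dots,p_n$ in cyclic order; identify $p_i$ with label $i$, so triangulations of $Q$ (using only vertices of $Q$) are identified with elements of $\mathcal{T}_n$ (each triangulation identified with its set of diagonals) and diagonals with elements of $\mathrm{Diag}_n=\{\{i,j\}\subseteq[n]: i-j\not\equiv\pm1 \pmod n\}$. Two diagonals cross if they meet in the interior of $Q$. Let $X_Q$ be the space of formal combinations $\sum_{p\in V(Q)} c_p\cdot p$ with $\sum_p c_p=0$ and $\sum_p c_p p=0$ in $\mathbb{R}^2$; let $X_Q^*$ be the space of functions $V(Q)\to\mathbb{R}$ modulo restrictions of affine functions $\mathbb{R}^2\to\mathbb{R}$, with pairing $\langle[\psi],\sum_p c_p\cdot p\rangle=\sum_p c_p\psi(p)$. For a triangulation $T$ let $v_T=(\operatorname{area}(Q_{T,p}))_{p\in V(Q)}$ where $Q_{T,p}$ is the union of the triangles of $T$ having $p$ as a vertex. The secondary polytope $\Sigma_Q$ is the convex hull of the $v_T$, translated to lie in $X_Q$. It is known (Gelfand–Kapranov–Zelevinsky) that $\Sigma_Q$ is a full-dimensional polytope in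 the $(n-3)$-dimensional space $X_Q$ realizing the associahedron: its vertices are exactly the points $v_T$, $T\in\mathcal{T}_n$; its facets are $f_d$, $d\in\mathrm{Diag}_n$, where $f_d$ contains $v_T$ iff $d\in T$; and an outward normal of $f_d$ is $f_d^\perp=[\psi_d]$, where $\psi_d=\min(\ell_d,0)$ restricted to $V(Q)$ and $\ell_d$ is any nonzero affine function vanishing at both endpoints of $d$. Two facets $f_d,f_{d'}$ share a vertex iff $d,d'$ do not cross. *)

(* Defs.v *)
From HB Require Import structures.
From mathcomp Require Import all_boot all_order all_algebra.
From mathcomp Require Import reals trigo.
Set Implicit Arguments. Unset Strict Implicit. Unset Printing Implicit Defensive.
Import Order.TTheory GRing.Theory Num.Theory.
Local Open Scope ring_scope.

Section Polygon.
Variables (R : realType) (n : nat).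

Definition vx (k : 'I_n) : R := cos (2 * pi * k%:R / n%:R).
Definition vy (k : 'I_n) : R := sin (2 * pi * k%:R / n%:R).

Definition is_diag (i j : 'I_n) : bool :=
  [&& (i < j)%N, (j - i != 1)%N & (j - i != n.-1)%N].

(* Two (distinct) diagonals cross iff they meet in the interior of Q; for a
   strictly convex polygon this means their relatively open segments meet. *)
Definition cross (i j k l : 'I_n) : Prop :=
  (i, j) <> (k, l) /\
  exists t s : R, [/\ 0 < t < 1, 0 < s < 1,
    (1 - t) * vx i + t * vx j = (1 - s) * vx k + s * vx l &
    (1 - t) * vy i + t * vy j = (1 - s) * vy k + s * vy l].

(* ell_d: a nonzero affine function vanishing at p_i and p_j. *)
Definition ell (i j k : 'I_n) : R :=
  (vx j - vx i) * (vy k - vy i) - (vy j - vy i) * (vx k - vx i).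

(* psi_d = min(ell_d, 0) restricted to V(Q), as a row vector indexed by labels. *)
Definition psi (i j : 'I_n) : 'rV[R]_n := \row_k Num.min (ell i j k) 0.

Definition is_affine (a : 'rV[R]_n) : Prop :=
  exists c0 c1 c2 : R, forall k, a 0 k = c0 + c1 * vx k + c2 * vy k.

Definition bform (M : 'M[R]_n) (f g : 'rV[R]_n) : R := (f *m M *m g^T) 0 0.

End Polygon.

(* Main.v *)
Require Import Defs.
From HB Require Import structures.
From mathcomp Require Import all_boot all_order all_algebra.
From mathcomp Require Import reals trigo.
From mathcomp Require Import ring lra zify.
Import Order.TTheory GRing.Theory Num.Theory.
Local Open Scope ring_scope.
Lemma cosDB {R : realType} (x y : R) : cos (x + y) - cos (x - y) = -2 * sin x * sin y.
Proof. rewrite cosD cosB; ring. Qed.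
Lemma sinDB {R : realType} (x y : R) : sin (x + y) - sin (x - y) = 2 * cos x * sin y.
Proof. rewrite sinD sinB; ring. Qed.

Lemma ell_trig {R : realType} (a b c : R) :
  (cos b - cos a) * (sin c - sin a) - (sin b - sin a) * (cos c - cos a)
  = -4 * sin ((b - a) / 2) * sin ((c - a) / 2) * sin ((b - c) / 2).
Proof.
have e1 : cos b - cos a = -2 * sin ((b+a)/2) * sin ((b-a)/2).
  by rewrite -cosDB; congr (cos _ - cos _); lra.
have e2 : sin c - sin a = 2 * cos ((c+a)/2) * sin ((c-a)/2).
  by rewrite -sinDB; congr (sin _ - sin _); lra.
have e3 : sin b - sin a = 2 * cos ((b+a)/2) * sin ((b-a)/2).
  by rewrite -sinDB; congr (sin _ - sin _); lra.
have e4 : cos c - cos a = -2 * sin ((c+a)/2) * sin ((c-a)/2).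
  by rewrite -cosDB; congr (cos _ - cos _); lra.
have e5 : sin ((b - c) / 2) = sin ((b+a)/2 - (c+a)/2) by congr sin; lra.
rewrite e1 e2 e3 e4 e5 sinB; ring.
Qed.

Lemma ell_formula {R : realType} {n : nat} (hn : (0 < n)%N) (i j m : 'I_n) :
  ell R i j m = -4 * sin (pi * (j%:R - i%:R) / n%:R)
     * sin (pi * (m%:R - i%:R) / n%:R) * sin (pi * (j%:R - m%:R) / n%:R).
Proof.
have hn0 : (n%:R : R) != 0 by rewrite pnatr_eq0 -lt0n.
rewrite /ell /vx /vy ell_trig; congr (_ * sin _ * sin _ * sin _); field; exact: hn0.
Qed.

Lemma sinS_pos {R : realType} {n p q : nat} : (q < p)%N -> (p < n)%N ->
  0 < sin (pi * (p%:R - q%:R) / n%:R :> R).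
Proof.
move=> hqp hpn.
have hn : (0 : R) < n%:R by rewrite ltr0n; lia.
have h1 : (q%:R : R) < p%:R by rewrite ltr_nat.
have h2 : (p%:R : R) < n%:R by rewrite ltr_nat.
have h3 : (0 : R) <= q%:R by [].
apply: sin_gt0_pi; apply/andP; split.
  by apply: divr_gt0 => //; apply: mulr_gt0; [exact: pi_gt0| lra].
rewrite ltr_pdivrMr //; rewrite ltr_pM2l; [lra | exact: pi_gt0].
Qed.

Lemma sinS_neg {R : realType} {n p q : nat} : (p < q)%N -> (q < n)%N ->
  sin (pi * (p%:R - q%:R) / n%:R :> R) < 0.
Proof.
move=> hpq hqn.
have -> : pi * (p%:R - q%:R) / n%:R = - (pi * (q%:R - p%:R) / n%:R :> R) by ring.
by rewrite sinN oppr_lt0; apply: sinS_pos.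
Qed.
Lemma ell_lt0_of {R : realType} {n : nat} (i j m : 'I_n) :
  (i < m)%N -> (m < j)%N -> ell R i j m < 0.
Proof.
move=> him hmj.
have hn : (0 < n)%N by case: n i {j m him hmj} => [[]|].
rewrite ell_formula //.
have a := sinS_pos (R:=R) (ltn_trans him hmj) (ltn_ord j).
have b := sinS_pos (R:=R) him (ltn_ord m).
have c := sinS_pos (R:=R) hmj (ltn_ord j).
have := mulr_gt0 (mulr_gt0 a b) c. lra.
Qed.

Lemma ell_gt0_of {R : realType} {n : nat} (i j m : 'I_n) :
  (i < j)%N -> ((m < i)%N || (j < m)%N) -> 0 < ell R i j m.
Proof.
move=> hij /orP [h|h].
- have hn : (0 < n)%N by case: n i {j m hij h} => [[]|].
  rewrite ell_formula //.
  have a := sinS_pos (R:=R) hij (ltn_ord j).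
  have b := sinS_neg (R:=R) h (ltn_ord i).
  have c := sinS_pos (R:=R) (ltn_trans h hij) (ltn_ord j).
  rewrite -oppr_gt0 in b.
  have := mulr_gt0 (mulr_gt0 a b) c; lra.
- have hn : (0 < n)%N by case: n i {j m hij h} => [[]|].
  rewrite ell_formula //.
  have a := sinS_pos (R:=R) hij (ltn_ord j).
  have b := sinS_pos (R:=R) (ltn_trans hij h) (ltn_ord m).
  have c := sinS_neg (R:=R) h (ltn_ord m).
  rewrite -oppr_gt0 in c.
  have := mulr_gt0 (mulr_gt0 a b) c; lra.
Qed.
Lemma ell_ii {R : realType} {n : nat} (i j : 'I_n) : ell R i j i = 0.
Proof. rewrite /ell; ring. Qed.
Lemma ell_jj {R : realType} {n : nat} (i j : 'I_n) : ell R i j j = 0.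
Proof. rewrite /ell; ring. Qed.

Lemma ell_lt0_inv {R : realType} {n : nat} (i j m : 'I_n) : (i < j)%N ->
  ell R i j m < 0 -> (i < m)%N && (m < j)%N.
Proof.
move=> hij hl.
case: (ltngtP m i) => [h|h|h].
- by have := @ell_gt0_of R n i j m hij; rewrite h /=; move/(_ isT); lra.
- case: (ltngtP m j) => [h'|h'|h']; first by rewrite ?h ?h'.
  + by have := @ell_gt0_of R n i j m hij; rewrite h' orbT; move/(_ isT); lra.
  + by move: hl; rewrite (val_inj h') ell_jj ltxx.
- by move: hl; rewrite (val_inj h) ell_ii ltxx.
Qed.

Lemma ell_gt0_inv {R : realType} {n : nat} (i j m : 'I_n) : (i < j)%N ->
  0 < ell R i j m -> (m < i)%N || (j < m)%N.
Proof.
move=> hij hl.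
case: (ltngtP m i) => [h|h|h]; first by rewrite ?h.
- case: (ltngtP m j) => [h'|h'|h']; last 1 first.
  + by move: hl; rewrite (val_inj h') ell_jj ltxx.
  + by have := @ell_lt0_of R n i j m h h'; lra.
  + by rewrite ?h' ?orbT.
- by move: hl; rewrite (val_inj h) ell_ii ltxx.
Qed.
Lemma vxyS {R : realType} {n : nat} (k : 'I_n) :
  vx R (ordS k) = cos (2 * pi * k%:R / n%:R + 2 * pi / n%:R) /\
  vy R (ordS k) = sin (2 * pi * k%:R / n%:R + 2 * pi / n%:R).
Proof.
have hn : (0 < n)%N by case: n k => [[]|].
have hn0 : (n%:R : R) != 0 by rewrite pnatr_eq0 -lt0n.
rewrite /vx /vy /=.
have := ltn_ord k; rewrite leq_eqVlt => /orP [/eqP e|h].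
- rewrite [in (_ %% _)%N]e modnn.
  have hk : (n%:R : R) = (k.+1)%:R by rewrite e.
  have -> : 2 * pi * k%:R / n%:R + 2 * pi / n%:R = pi *+ 2 :> R.
    rewrite hk -natr1 in hn0 *; rewrite mulr2n; field; exact: hn0.
  by rewrite cos2pi sin2pi !mulr0 mul0r cos0 sin0.
- rewrite modn_small //; split; congr (_ _); rewrite -natr1; field; exact: hn0.
Qed.

Lemma sum_vxy {R : realType} {n : nat} : (1 < n)%N ->
  \sum_(k < n) vx R k = 0 /\ \sum_(k < n) vy R k = 0.
Proof.
move=> hn1; have hn : (0 < n)%N by lia.
have hn0 : (n%:R : R) != 0 by rewrite pnatr_eq0 -lt0n.
have hnp : (0 : R) < n%:R by rewrite ltr0n.
pose s : R := sin (pi / n%:R).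
have hs : 0 < s.
  apply: sin_gt0_pi; apply/andP; split; first by apply: divr_gt0 => //; exact: pi_gt0.
  rewrite ltr_pdivrMr // ltr_pMr ?pi_gt0 // ltr1n; exact: hn1.
split.
- pose f (k : nat) : R := sin (2 * pi * k%:R / n%:R - pi / n%:R).
  have ef : forall k : nat, f k.+1 - f k = 2 * s * cos (2 * pi * k%:R / n%:R).
    move=> k; rewrite /f /s (_ : 2 * pi * k.+1%:R / n%:R - pi / n%:R =
       2 * pi * k%:R / n%:R + pi / n%:R); last by rewrite -natr1; field.
    by rewrite sinDB; ring.
  have : \sum_(0 <= k < n) (f k.+1 - f k) = 0.
    rewrite telescope_sumr // /f.
    have -> : 2 * pi * n%:R / n%:R - pi / n%:R = - (pi / n%:R) + pi *+ 2 :> R.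
      by rewrite mulr2n; field.
    by rewrite (sinD2pi (- (pi / n%:R))) (_ : ((0%N)%:R : R) = 0) // mulr0 mul0r sub0r subrr.
  rewrite big_mkord (eq_bigr _ (fun (k : 'I_n) _ => ef k)) -mulr_sumr => h.
  move/eqP: h; rewrite mulf_eq0 => /orP [/eqP e|/eqP e]; [lra | exact: e].
- pose f (k : nat) : R := - cos (2 * pi * k%:R / n%:R - pi / n%:R).
  have ef : forall k : nat, f k.+1 - f k = 2 * s * sin (2 * pi * k%:R / n%:R).
    move=> k; rewrite /f /s (_ : 2 * pi * k.+1%:R / n%:R - pi / n%:R =
       2 * pi * k%:R / n%:R + pi / n%:R); last by rewrite -natr1; field.
    have e := cosDB (R:=R) (2 * pi * k%:R / n%:R) (pi / n%:R).
    transitivity (- (cos (2 * pi * k%:R / n%:R + pi / n%:R) - cos (2 * pi * k%:R / n%:R - pi / n%:R)) : R); first by ring.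
    by rewrite e; ring.
  have : \sum_(0 <= k < n) (f k.+1 - f k) = 0.
    rewrite telescope_sumr // /f.
    have -> : 2 * pi * n%:R / n%:R - pi / n%:R = - (pi / n%:R) + pi *+ 2 :> R.
      by rewrite mulr2n; field.
    by rewrite (cosD2pi (- (pi / n%:R))) (_ : ((0%N)%:R : R) = 0) // mulr0 mul0r sub0r; ring.
  rewrite big_mkord (eq_bigr _ (fun (k : 'I_n) _ => ef k)) -mulr_sumr => h.
  move/eqP: h; rewrite mulf_eq0 => /orP [/eqP e|/eqP e]; [lra | exact: e].
Qed.
Definition cc (R : realType) (n : nat) : R := cos (2 * pi / n%:R).
Definition ss (R : realType) (n : nat) : R := sin (2 * pi / n%:R).
Definition Mx (R : realType) (n : nat) : 'M[R]_n :=
  \matrix_(k, l) (1 + (n%:R * cc R n / (1 - cc R n)) * (k == l)%:R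
     + (- n%:R / (2 * (1 - cc R n))) * ((l == ordS k)%:R + (k == ordS l)%:R)).

Lemma Mx_sym (R : realType) (n : nat) : (Mx R n)^T = Mx R n.
Proof.
apply/matrixP => k l; rewrite !mxE [l == k]eq_sym.
by rewrite [(k == ordS l)%:R + _]addrC.
Qed.

Lemma cc_lt1 (R : realType) (n : nat) : (1 < n)%N -> 0 < 1 - cc R n.
Proof.
move=> hn1.
have hnp : (0 : R) < n%:R by rewrite ltr0n; lia.
have hs : 0 < sin (pi / n%:R : R).
  apply: sin_gt0_pi; apply/andP; split; first by apply: divr_gt0 => //; exact: pi_gt0.
  rewrite ltr_pdivrMr // ltr_pMr ?pi_gt0 // ltr1n; exact: hn1.
rewrite /cc (_ : 2 * pi / n%:R = pi / n%:R + pi / n%:R); last by ring.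
rewrite cosD -expr2 cos2sin2.
have := mulr_gt0 hs hs; rewrite -expr2; lra.
Qed.

Lemma vx_S (R : realType) (n : nat) (l : 'I_n) :
  vx R (ordS l) = vx R l * cc R n - vy R l * ss R n /\
  vy R (ordS l) = vy R l * cc R n + vx R l * ss R n.
Proof. by case: (vxyS (R:=R) l) => -> ->; rewrite cosD sinD /vx /vy /cc /ss; split; ring. Qed.

Lemma vx_P (R : realType) (n : nat) (l : 'I_n) :
  vx R (ord_pred l) = vx R l * cc R n + vy R l * ss R n /\
  vy R (ord_pred l) = vy R l * cc R n - vx R l * ss R n.
Proof.
case: (vxyS (R:=R) (ord_pred l)); rewrite ord_predK => -> ->.
rewrite /vx /vy /cc /ss.
set t := 2 * pi * (ord_pred l)%:R / n%:R.
set h := 2 * pi / n%:R.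
have -> : cos t = cos ((t + h) - h) by congr cos; ring.
have -> : sin t = sin ((t + h) - h) by congr sin; ring.
by rewrite cosB sinB; split; ring.
Qed.

Lemma sum_delta (R : realType) (n : nat) (F : 'I_n -> R) (l : 'I_n) :
  \sum_k F k * (k == l)%:R = F l.
Proof.
rewrite (bigD1 l) //= eqxx mulr1 big1 ?addr0 //.
by move=> k /negbTE ->; rewrite mulr0.
Qed.

Lemma sum_deltaS (R : realType) (n : nat) (F : 'I_n -> R) (l : 'I_n) :
  \sum_k F k * (l == ordS k)%:R = F (ord_pred l).
Proof.
rewrite -sum_delta; apply: eq_bigr => k _.
have -> : (l == ordS k) = (k == ord_pred l); last by [].
apply/idP/idP => /eqP e; apply/eqP.
  by rewrite e ordSK.
by rewrite e ord_predK.
Qed.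
Lemma killM (R : realType) (n : nat) (hn : (1 < n)%N) (a : 'rV[R]_n) :
  is_affine a -> a *m Mx R n = 0.
Proof.
case=> c0 [c1 [c2 ha]]; apply/rowP => l; rewrite !mxE.
pose A : R := n%:R * cc R n / (1 - cc R n).
pose B : R := - n%:R / (2 * (1 - cc R n)).
have E : forall k, a 0 k * Mx R n k l = a 0 k + A * (a 0 k * (k == l)%:R)
   + B * (a 0 k * (l == ordS k)%:R) + B * (a 0 k * (k == ordS l)%:R).
  by move=> k; rewrite mxE /A /B; ring.
rewrite (eq_bigr _ (fun k _ => E k)) !big_split /= -!mulr_sumr.
rewrite sum_delta sum_deltaS sum_delta.
rewrite (eq_bigr _ (fun k _ => ha k)) !big_split /= -!mulr_sumr.

have s12 := @sum_vxy R n hn. rewrite s12.1 s12.2.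
rewrite sumr_const card_ord -mulr_natr !ha.
have [e1 e2] := vx_S R n l; have [e3 e4] := vx_P R n l; rewrite e1 e2 e3 e4.
have h1 := cc_lt1 R n hn.
have h2 : 1 - cc R n != 0 by apply: lt0r_neq0.
by rewrite /A /B; field.
Qed.
Lemma bform_kill (R : realType) (n : nat) (hn : (1 < n)%N) (a f : 'rV[R]_n) :
  is_affine a -> bform (Mx R n) a f = 0 /\ bform (Mx R n) f a = 0.
Proof.
move=> ha; have k := killM R n hn a ha; split.
  by rewrite /bform k mul0mx mxE.
have k' : Mx R n *m a^T = 0 by rewrite -{1}Mx_sym -trmx_mul k trmx0.
by rewrite /bform -mulmxA k' mulmx0 mxE.
Qed.

Lemma bform_subl (R : realType) (n : nat) (M : 'M[R]_n) (u w v : 'rV[R]_n) :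
  bform M (u - w) v = bform M u v - bform M w v.
Proof. by rewrite /bform !mulmxBl !mxE. Qed.

Lemma bform_subr (R : realType) (n : nat) (M : 'M[R]_n) (u w v : 'rV[R]_n) :
  bform M v (u - w) = bform M v u - bform M v w.
Proof. by rewrite /bform linearB /= mulmxBr !mxE. Qed.

Lemma bform_sum (R : realType) (n : nat) (M : 'M[R]_n) (u v : 'rV[R]_n) :
  bform M u v = \sum_l \sum_k u 0 k * M k l * v 0 l.
Proof.
rewrite /bform mxE; apply: eq_bigr => l _; rewrite !mxE mulr_suml.
by apply: eq_bigr => k _.
Qed.

Lemma sum_pos (R : realType) (n : nat) (F : 'I_n -> R) (i0 : 'I_n) :
  (forall i, 0 <= F i) -> 0 < F i0 -> 0 < \sum_i F i.
Proof.
move=> h0 h1; rewrite (bigD1 i0) //=.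
have : 0 <= \sum_(i | i != i0) F i by apply: sumr_ge0 => i _.
lra.
Qed.

Lemma bpos (R : realType) (n : nat) (M : 'M[R]_n) (u v : 'rV[R]_n) (m0 m1 : 'I_n) :
  (forall m, u 0 m <= 0) -> (forall m, v 0 m <= 0) ->
  (forall m m', u 0 m != 0 -> v 0 m' != 0 -> M m m' = 1) ->
  u 0 m0 < 0 -> v 0 m1 < 0 -> 0 < bform M u v.
Proof.
move=> hu hv hM h0 h1; rewrite bform_sum.
have T : forall k l, 0 <= u 0 k * M k l * v 0 l.
  move=> k l.
  have [e|e] := eqVneq (u 0 k) 0; first by rewrite e !mul0r.
  have [e'|e'] := eqVneq (v 0 l) 0; first by rewrite e' mulr0.
  rewrite (hM _ _ e e') mulr1; have := hu k; have := hv l; nra.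
apply: (@sum_pos R n _ m1) => [l|]; first by apply: sumr_ge0 => k _.
apply: (@sum_pos R n _ m0) => [k|]; first exact: T.
rewrite hM ?mulr1; [nra | lra | lra].
Qed.
Lemma Mx_one (R : realType) (n : nat) (m m' : 'I_n) :
  (m + 2 <= m')%N -> (m' + 2 <= m + n)%N -> Mx R n m m' = 1 /\ Mx R n m' m = 1.
Proof.
move=> h1 h2.
have hm := ltn_ord m; have hm' := ltn_ord m'.
have e1 : (m == m') = false.
  by apply/negbTE; rewrite -(inj_eq val_inj) /=; lia.
have e2 : (m' == ordS m) = false.
  by apply/negbTE; rewrite -(inj_eq val_inj) /=; rewrite modn_small; lia.
have e3 : (m == ordS m') = false.
  apply/negbTE; rewrite -(inj_eq val_inj) /=.
  case: (ltngtP m'.+1 n) => h; [rewrite modn_small //; lia | lia |].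
  rewrite h modnn; lia.
rewrite /Mx !mxE.
set x1 := (m == m'); set x2 := (m' == m); set x3 := (m' == ordS m); set x4 := (m == ordS m').
have -> : x1 = false by exact: e1.
have -> : x2 = false by rewrite /x2 eq_sym; exact: e1.
have -> : x3 = false by exact: e2.
have -> : x4 = false by exact: e3.
by rewrite /= !addr0 !mulr0 !addr0.
Qed.
Definition ellrow (R : realType) {n : nat} (i j : 'I_n) : 'rV[R]_n := \row_k ell R i j k.

Lemma ellrow_aff (R : realType) (n : nat) (i j : 'I_n) : is_affine (ellrow R i j).
Proof.
exists (- (vx R j - vx R i) * vy R i + (vy R j - vy R i) * vx R i),
  (- (vy R j - vy R i)), (vx R j - vx R i) => k.
rewrite mxE /ell; ring.
Qed.

Lemma min_in (R : realType) (x : R) :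
  [/\ Num.min x 0 <= 0, Num.min x 0 != 0 -> x < 0 & x < 0 -> Num.min x 0 < 0].
Proof.
have [h|h] := leP x 0.
  split; rewrite ?eqxx //; move=> *; lra.
split; rewrite ?eqxx //; move=> *; lra.
Qed.

Lemma min_out (R : realType) (x : R) :
  [/\ Num.min x 0 - x <= 0, Num.min x 0 - x != 0 -> 0 < x & 0 < x -> Num.min x 0 - x < 0].
Proof.
have [h|h] := leP x 0.
  split; rewrite ?subrr ?eqxx //; move=> *; lra.
split; move=> *; lra.
Qed.

Lemma in_wit (n : nat) (i j : 'I_n) : is_diag i j -> exists m : 'I_n, (i < m)%N && (m < j)%N.
Proof.
case/and3P => h1 h2 h3.
have hm : (i.+1 < n)%N by have := ltn_ord j; lia.
by exists (Ordinal hm) => /=; apply/andP; split; lia.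
Qed.

Lemma out_wit (n : nat) (i j : 'I_n) : is_diag i j -> exists m : 'I_n, (m < i)%N || (j < m)%N.
Proof.
case/and3P => h1 h2 h3.
have hj := ltn_ord j.
case: (posnP i) => hi.
- have hm : (n.-1 < n)%N by lia.
  exists (Ordinal hm) => /=; apply/orP; right; lia.
- have hm : (0 < n)%N by lia.
  by exists (Ordinal hm) => /=; rewrite hi.
Qed.

Lemma frac01 (R : realType) (A B : R) : A * B < 0 -> 0 < A / (A - B) < 1.
Proof.
move=> h.
have [hA|hA] := ltP A 0.
- have hB : 0 < B by nra.
  have hd : A - B < 0 by lra.
  apply/andP; split.
  + have -> : A / (A - B) = (- A) / (B - A) by rewrite -opprB invrN mulrN mulNr.
    by apply: divr_gt0; lra.
  + have -> : A / (A - B) = (- A) / (B - A) by rewrite -opprB invrN mulrN mulNr.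
    by rewrite ltr_pdivrMr; lra.
- have hA' : 0 < A by case: (ltrgt0P A) h => //; [move=> ?; nra | move=> ->; rewrite mul0r ltxx].
  have hB : B < 0 by nra.
  have hd : 0 < A - B by lra.
  apply/andP; split; first by apply: divr_gt0.
  by rewrite ltr_pdivrMr //; lra.
Qed.
Lemma inter {R : fieldType} (xi yi xj yj xk yk xl yl : R) :
  (xj - xi) * (yk - yi) - (yj - yi) * (xk - xi) -
    ((xj - xi) * (yl - yi) - (yj - yi) * (xl - xi)) != 0 ->
  (xl - xk) * (yi - yk) - (yl - yk) * (xi - xk) -
    ((xl - xk) * (yj - yk) - (yl - yk) * (xj - xk)) != 0 ->
  let A := (xj - xi) * (yk - yi) - (yj - yi) * (xk - xi) in
  let B := (xj - xi) * (yl - yi) - (yj - yi) * (xl - xi) in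
  let C := (xl - xk) * (yi - yk) - (yl - yk) * (xi - xk) in
  let D := (xl - xk) * (yj - yk) - (yl - yk) * (xj - xk) in
  (1 - C / (C - D)) * xi + C / (C - D) * xj = (1 - A / (A - B)) * xk + A / (A - B) * xl
  /\ (1 - C / (C - D)) * yi + C / (C - D) * yj = (1 - A / (A - B)) * yk + A / (A - B) * yl.
Proof.
move=> h1 h2 A B C D; rewrite /A /B /C /D; split; field; by rewrite h1 h2.
Qed.

Lemma cross_of (R : realType) (n : nat) (i j k l : 'I_n) : (i, j) <> (k, l) ->
  ell R i j k * ell R i j l < 0 -> ell R k l i * ell R k l j < 0 -> cross R i j k l.
Proof.
move=> hne h1 h2; split => //.
have d1 : ell R i j k - ell R i j l != 0.
  apply/eqP => e; have e' : ell R i j k = ell R i j l by lra.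
  by move: h1; rewrite e'; nra.
have d2 : ell R k l i - ell R k l j != 0.
  apply/eqP => e; have e' : ell R k l i = ell R k l j by lra.
  by move: h2; rewrite e'; nra.
have [e1 e2] := @inter R (vx R i) (vy R i) (vx R j) (vy R j) (vx R k) (vy R k) (vx R l) (vy R l) d1 d2.
exists (ell R k l i / (ell R k l i - ell R k l j)),
       (ell R i j k / (ell R i j k - ell R i j l)).
split; [exact: frac01 | exact: frac01 | exact: e1 | exact: e2].
Qed.
Lemma final (R : realType) (n : nat) (u v : 'rV[R]_n) (su sv : 'I_n -> bool) :
  (forall m, u 0 m <= 0) -> (forall m, v 0 m <= 0) ->
  (forall m, u 0 m != 0 -> su m) -> (forall m, v 0 m != 0 -> sv m) ->
  (forall m, su m -> u 0 m < 0) -> (forall m, sv m -> v 0 m < 0) ->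
  (exists m, su m) -> (exists m, sv m) ->
  (forall m m', su m -> sv m' ->
     ((m + 2 <= m') && (m' + 2 <= m + n)) || ((m' + 2 <= m) && (m + 2 <= m' + n)))%N ->
  0 < bform (Mx R n) u v.
Proof.
move=> hu hv hsu hsv hsu' hsv' [m0 h0] [m1 h1] hsep.
apply: (@bpos R n (Mx R n) u v m0 m1) => //; last by apply: hsv'.
- move=> m m' a b; have := hsep m m' (hsu _ a) (hsv _ b).
  case/orP => /andP [c d]; first by case: (@Mx_one R n _ _ c d).
  by case: (@Mx_one R n _ _ c d).
- exact: hsu'.
Qed.

Lemma In_props (R : realType) (n : nat) (i j : 'I_n) : (i < j)%N ->
  [/\ forall m : 'I_n, (psi R i j) 0 m <= 0,
      forall m : 'I_n, (psi R i j) 0 m != 0 -> (i < m)%N && (m < j)%N &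
      forall m : 'I_n, (i < m)%N && (m < j)%N -> (psi R i j) 0 m < 0].
Proof.
move=> hij; split => m; rewrite mxE; case: (min_in R (ell R i j m)) => // _ a b.
- by move/a; apply: ell_lt0_inv.
- by case/andP => c d; apply: b; apply: ell_lt0_of.
Qed.

Lemma Out_props (R : realType) (n : nat) (i j : 'I_n) : (i < j)%N ->
  [/\ forall m : 'I_n, (psi R i j - ellrow R i j) 0 m <= 0,
      forall m : 'I_n, (psi R i j - ellrow R i j) 0 m != 0 -> (m < i)%N || (j < m)%N &
      forall m : 'I_n, (m < i)%N || (j < m)%N -> (psi R i j - ellrow R i j) 0 m < 0].
Proof.
move=> hij; split => m; rewrite !mxE; case: (min_out R (ell R i j m)) => // _ a b.
- by move/a; apply: ell_gt0_inv.
- by move=> c; apply: b; apply: ell_gt0_of.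
Qed.
Theorem lemma2p7 (R : realType) (n : nat) (hn : (4 <= n)%N) :
  exists M : 'M[R]_n,
    [/\ M^T = M,
        (forall a : 'rV[R]_n, is_affine (R:=R) a ->
           forall f : 'rV[R]_n, bform M a f = 0 /\ bform M f a = 0) &
        (forall i j k l : 'I_n, @is_diag n i j -> @is_diag n k l -> ~ @cross R n i j k l ->
           0 < bform M (@psi R n i j) (@psi R n k l))].
Proof.
have hn1 : (1 < n)%N by lia.
exists (Mx R n); split; first exact: Mx_sym.
  by move=> a ha f; apply: bform_kill.
move=> i j k l dij dkl ncr.
have hij : (i < j)%N by case/and3P: dij.
have hkl : (k < l)%N by case/and3P: dkl.
have hi := ltn_ord i; have hj := ltn_ord j; have hk := ltn_ord k; have hl := ltn_ord l.
have EL : forall v, bform (Mx R n) (psi R i j - ellrow R i j) v = bform (Mx R n) (psi R i j) v.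
  by move=> v; rewrite bform_subl (bform_kill R n hn1 (ellrow R i j) v (ellrow_aff R n i j)).1 subr0.
have ER : forall u, bform (Mx R n) u (psi R k l - ellrow R k l) = bform (Mx R n) u (psi R k l).
  by move=> u; rewrite bform_subr (bform_kill R n hn1 (ellrow R k l) u (ellrow_aff R n k l)).2 subr0.
have [Iu1 Iu2 Iu3] := In_props R n i j hij.
have [Ou1 Ou2 Ou3] := Out_props R n i j hij.
have [Iv1 Iv2 Iv3] := In_props R n k l hkl.
have [Ov1 Ov2 Ov3] := Out_props R n k l hkl.
have Wi := in_wit n i j dij; have Wo := out_wit n i j dij.
have Wi' := in_wit n k l dkl; have Wo' := out_wit n k l dkl.
case: (leqP j k) => hjk.
  apply: (@final R n _ _ _ _ Iu1 Iv1 Iu2 Iv2 Iu3 Iv3 Wi Wi') => m m' /andP[a b] /andP[c d].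
  have := ltn_ord m'; lia.
case: (leqP l i) => hli.
  apply: (@final R n _ _ _ _ Iu1 Iv1 Iu2 Iv2 Iu3 Iv3 Wi Wi') => m m' /andP[a b] /andP[c d].
  have := ltn_ord m; lia.
case: (boolP ((k <= i) && (j <= l))%N) => [/andP [hC1 hC2]|hC].
  rewrite -ER.
  apply: (@final R n _ _ _ _ Iu1 Ov1 Iu2 Ov2 Iu3 Ov3 Wi Wo') => m m' /andP[a b] /orP[c|c];
  have := ltn_ord m; have := ltn_ord m'; lia.
case: (boolP ((i <= k) && (l <= j))%N) => [/andP [hD1 hD2]|hD].
  rewrite -EL.
  apply: (@final R n _ _ _ _ Ou1 Iv1 Ou2 Iv2 Ou3 Iv3 Wo Wi') => m m' /orP[a|a] /andP[c d];
  have := ltn_ord m; have := ltn_ord m'; lia.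
exfalso; apply: ncr.
move: hC hD; rewrite !negb_and -!ltnNge => /orP [hC|hC] /orP [hD|hD].
- lia.
- (* i < k < j < l *)
  apply: cross_of.
  + by case => e _; move: hC; rewrite e ltnn.
  + have := @ell_lt0_of R n i j k hC hjk.
    have := @ell_gt0_of R n i j l hij; rewrite hD orbT => /(_ isT).
    nra.
  + have := @ell_gt0_of R n k l i hkl; rewrite hC /= => /(_ isT).
    have := @ell_lt0_of R n k l j hjk hD.
    nra.
- (* k < i < l < j *)
  apply: cross_of.
  + by case => e _; move: hD; rewrite e ltnn.
  + have := @ell_gt0_of R n i j k hij; rewrite hD /= => /(_ isT).
    have := @ell_lt0_of R n i j l hli hC.
    nra.
  + have := @ell_lt0_of R n k l i hD hli.
    have := @ell_gt0_of R n k l j hkl; rewrite hC orbT => /(_ isT).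
    nra.
- lia.
Qed.
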